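(* For the deterministic system described in the context, the recurrence time $\zeta_n$ is finite for all sufficiently large $n$ and \[ \lim_{n\to\infty}\frac{\zeta_n}{\log n}=\frac{\min\{1-\beta,\alpha\}}{\lambda_1}. \]
   Context: Fix constants $r_0,d_0\ge 0$ with $\lambda_0:=r_0-d_0<0$, $d_1>0$, $k>1$, $\alpha\in(0,1)$, $\beta\in(0,1)$. Let $f:[0,\infty)^2\to[0,\infty)$ satisfy: (A1) $f$ is Lipschitz continuous; (A2) $f(x,y)=r_1$ when $x+y=0$ and $f(x,y)=d_1$ when $x+y=1$, where $r_1:=f(0,0)>d_1$; (A3) $f(x,y)=\Phi(x+y)$ for some non-increasing function $\Phi:[0,\infty)\to[0,\infty)$; (A4) $f(x,y)\to0$ as $x\to\infty$ and as $y\to\infty$; (A5) $f(x,y)\ge \lambda_1(1-(x+y))+d_1$ for all $x,y\ge0$, where $\lambda_1:=r_1-d_1>0$. Put $\phi(x,y):=f(x,y)-d_1$. For each integer $n\ge1$ let $K=K(n):=kn$ and let $(y_0,y_1,y_\beta)$ solve \[ \dot y_0=\lambda_0 y_0,\qquad \dot y_1=\phi(y_0,y_1)\,y_1+n^{-\alpha}y_0,\qquad \dot y_\beta=\phi(y_0,y_1)\,y_\beta, \] with $(y_0(0),y_1(0),y_\beta(0))=(n/K,\,n^\beta/K,\,n^\beta/K)$. Define the deterministic recurrence time $\zeta_n:=\inf\{t>0: y_1(t)=n/K\}$. *)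

(* Defs.v *)
From Stdlib Require Import Reals.
From Coquelicot Require Import Coquelicot.
Open Scope R_scope.

Definition lipschitz_on_quadrant (f : R -> R -> R) : Prop :=
  exists L : R, 0 <= L /\
    forall x y x' y', 0 <= x -> 0 <= y -> 0 <= x' -> 0 <= y' ->
      Rabs (f x y - f x' y') <= L * (Rabs (x - x') + Rabs (y - y')).

(* The standing assumptions (A1)-(A5) on f : [0,oo)^2 -> [0,oo),
   with r1 := f 0 0 and lambda1 := r1 - d1. *)
Definition f_assumptions (f : R -> R -> R) (d1 : R) : Prop :=
  (forall x y, 0 <= x -> 0 <= y -> 0 <= f x y) /\
  lipschitz_on_quadrant f /\
  (f 0 0 > d1 /\
            (forall x y, 0 <= x -> 0 <= y -> x + y = 0 -> f x y = f 0 0) /\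
            (forall x y, 0 <= x -> 0 <= y -> x + y = 1 -> f x y = d1)) /\
  (exists Phi : R -> R,
              (forall a b, 0 <= a -> a <= b -> Phi b <= Phi a) /\
              (forall a, 0 <= a -> 0 <= Phi a) /\
              (forall x y, 0 <= x -> 0 <= y -> f x y = Phi (x + y))) /\
  (forall y, 0 <= y -> is_lim (fun x => f x y) p_infty 0) /\
           (forall x, 0 <= x -> is_lim (fun y => f x y) p_infty 0) /\
  (* A5 *) (forall x y, 0 <= x -> 0 <= y ->
              f x y >= (f 0 0 - d1) * (1 - (x + y)) + d1).

Definition solves_system (f : R -> R -> R) (r0 d0 d1 k alpha beta : R) (n : nat)
    (y0 y1 yb : R -> R) : Prop :=
  let lambda0 := r0 - d0 in
  let phi := fun x y => f x y - d1 in
  let nr := INR n in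
  let K := k * nr in
  (forall t, 0 < t -> is_derive y0 t (lambda0 * y0 t)) /\
  (forall t, 0 < t -> is_derive y1 t (phi (y0 t) (y1 t) * y1 t
                                      + Rpower nr (- alpha) * y0 t)) /\
  (forall t, 0 < t -> is_derive yb t (phi (y0 t) (y1 t) * yb t)) /\
  filterlim y0 (at_right 0) (locally (y0 0)) /\
  filterlim y1 (at_right 0) (locally (y1 0)) /\
  filterlim yb (at_right 0) (locally (yb 0)) /\
  y0 0 = nr / K /\ y1 0 = Rpower nr beta / K /\ yb 0 = Rpower nr beta / K.

(* The deterministic recurrence time zeta_n := inf {t > 0 : y1 t = n / K}
   (an extended real; +oo if the set is empty). *)
Definition zeta (k : R) (n : nat) (y1 : R -> R) : Rbar :=
  Glb_Rbar (fun t => 0 < t /\ y1 t = INR n / (k * INR n)).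

(* Main.v *)
Require Import Defs.
From Stdlib Require Import Reals.
From Coquelicot Require Import Coquelicot.
From Stdlib Require Import Lra Lia Ranalysis5 Classical.
Open Scope R_scope.

Lemma comb (y E F : R -> R) v : filterlim y (at_right 0) (locally v) ->
  continuous E 0 -> continuous F 0 ->
  filterlim (fun t => y t * E t + F t) (at_right 0) (locally (v * E 0 + F 0)).
Proof.
intros Hy HE HF.
assert (HE' : filterlim E (at_right 0) (locally (E 0))).
{ eapply filterlim_filter_le_1; [|exact HE]. intros P HP. unfold at_right, within. apply filter_imp with (2:=HP). auto. }
assert (HF' : filterlim F (at_right 0) (locally (F 0))).
{ eapply filterlim_filter_le_1; [|exact HF]. intros P HP. unfold at_right, within. apply filter_imp with (2:=HP). auto. }
eapply filterlim_comp_2 with (h := Rplus); [| exact HF' | apply (filterlim_plus (v * E 0) (F 0))].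
eapply filterlim_comp_2 with (h := Rmult); [exact Hy | exact HE' | apply (filterlim_mult v (E 0))].
Qed.

Lemma eps_right (h : R -> R) v : filterlim h (at_right 0) (locally v) ->
  forall e, 0 < e -> exists d, 0 < d /\ forall t, 0 < t < d -> Rabs (h t - v) < e.
Proof.
intros Hh e He.
destruct (Hh (fun x => Rabs (x - v) < e)) as [d Hd].
{ exists (mkposreal e He). intros x Hx. exact Hx. }
exists d. split. apply cond_pos. intros t Ht. apply Hd.
unfold ball; simpl; unfold AbsRing_ball, abs, minus, plus, opp; simpl.
rewrite Ropp_0, Rplus_0_r, Rabs_right; lra. lra.
Qed.

Lemma cont_of_der (h : R -> R) t l : is_derive h t l -> continuity_pt h t.
Proof.
intros H. apply continuity_pt_filterlim. apply (ex_derive_continuous (K:=R_AbsRing) (V:=R_NormedModule)). exists l. exact H.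
Qed.

Lemma mono (h dh : R -> R) a b :
  (forall t, a < t <= b -> is_derive h t (dh t)) ->
  (forall t, a < t <= b -> 0 <= dh t) ->
  forall s t, a < s -> s <= t -> t <= b -> h s <= h t.
Proof.
intros Hd Hp s t Hs Hst Htb.
destruct (MVT_gen h s t dh) as [c [Hc Heq]].
- intros x Hx. rewrite Rmin_left in Hx by lra. rewrite Rmax_right in Hx by lra. apply Hd. lra.
- intros x Hx. rewrite Rmin_left in Hx by lra. rewrite Rmax_right in Hx by lra.
  apply cont_of_der with (dh x). apply Hd. lra.
- rewrite Rmin_left in Hc by lra. rewrite Rmax_right in Hc by lra.
  assert (0 <= dh c * (t - s)). { apply Rmult_le_pos. apply Hp. lra. lra. }
  lra.
Qed.

Lemma mono0 (h dh : R -> R) b v :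
  filterlim h (at_right 0) (locally v) ->
  (forall t, 0 < t <= b -> is_derive h t (dh t)) ->
  (forall t, 0 < t <= b -> 0 <= dh t) ->
  forall t, 0 < t <= b -> v <= h t.
Proof.
intros Hl Hd Hp t Ht.
destruct (Rle_or_lt v (h t)) as [H|H]; auto.
destruct (eps_right h v Hl (v - h t)) as [d [Hd0 Hdd]]. lra.
set (s := Rmin (d/2) t).
assert (Hs : 0 < s <= t). { unfold s. split. apply Rmin_glb_lt; lra. apply Rmin_r. }
assert (Hsd : s < d). { unfold s. apply Rle_lt_trans with (d/2). apply Rmin_l. lra. }
assert (h s <= h t). { apply (mono h dh 0 b Hd Hp); lra. }
specialize (Hdd s ltac:(lra)). apply Rabs_def2 in Hdd. lra.
Qed.

Lemma ivt_hit (h : R -> R) s t th : s < t ->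
  (forall x, s <= x <= t -> continuity_pt h x) -> h s < th -> th <= h t ->
  exists x, s <= x <= t /\ h x = th.
Proof.
intros Hst Hc H1 H2.
destruct (Req_dec (h t) th) as [E|E]. { exists t. split; [lra|auto]. }
destruct (IVT_interv (fun x => h x - th) s t) as [z [Hz Hz2]].
- intros a Ha. apply continuity_pt_minus. apply Hc; auto. apply continuity_pt_const. intros u v; auto.
- auto.
- lra.
- lra.
- exists z. split; auto. lra.
Qed.

Lemma cont_eps (h : R -> R) x : continuity_pt h x ->
  forall e, 0 < e -> exists d, 0 < d /\ forall y, Rabs (y - x) < d -> Rabs (h y - h x) < e.
Proof.
intros H e He. destruct (H e He) as [d [Hd Hy]]. exists d. split; auto.
intros y Hyx. destruct (Req_dec y x) as [E|E].
- subst. rewrite Rminus_eq_0, Rabs_R0. auto.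
- apply Hy. split. split. exact I. auto. exact Hyx.
Qed.

Lemma der_pos_left (h : R -> R) t l : is_derive h t l -> 0 < l -> h t = 0 ->
  exists e, 0 < e /\ forall s, t - e < s < t -> h s < 0.
Proof.
intros Hd Hl H0. apply is_derive_Reals in Hd.
destruct (Hd (l/2) ltac:(lra)) as [d Hdd].
exists d. split. apply cond_pos. intros s Hs.
specialize (Hdd (s - t) ltac:(lra)).
assert (Hq : Rabs (s - t) < d). { rewrite Rabs_left by lra. lra. }
specialize (Hdd Hq). replace (t + (s - t)) with s in Hdd by ring. rewrite H0 in Hdd.
apply Rabs_def2 in Hdd. destruct Hdd as [_ Hq2].
assert (Hq3 : 0 < (h s - 0) / (s - t)) by lra.
unfold Rdiv in Hq3. rewrite Rminus_0_r in Hq3.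
assert (Hinv : / (s - t) < 0) by (apply Rinv_lt_0_compat; lra).
destruct (Rlt_or_le (h s) 0) as [A|A]; auto.
assert (0 <= h s * - / (s-t)) by (apply Rmult_le_pos; lra).
lra.
Qed.

Lemma first_pos (h : R -> R) :
  (forall t, 0 < t -> continuity_pt h t) ->
  (exists d, 0 < d /\ forall t, 0 < t < d -> 0 < h t) ->
  (forall t, 0 < t -> h t = 0 -> exists e, 0 < e /\ forall s, t - e < s < t -> h s < 0) ->
  forall t, 0 < t -> 0 < h t.
Proof.
intros Hc [d [Hd Hpos]] Hz t Ht.
destruct (Rlt_or_le 0 (h t)) as [A|A]; auto. exfalso.
set (E := fun s => 0 < s <= t /\ forall r, 0 < r <= s -> 0 < h r).
set (s0 := Rmin (d/2) t).
assert (Hs0 : 0 < s0 <= t /\ s0 < d).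
{ unfold s0. split. split. apply Rmin_glb_lt; lra. apply Rmin_r.
  apply Rle_lt_trans with (d/2). apply Rmin_l. lra. }
assert (HE0 : E s0). { split. lra. intros r Hr. apply Hpos. lra. }
destruct (completeness E) as [m [Hub Hlub]].
{ exists t. intros x Hx. apply Hx. }
{ exists s0. exact HE0. }
assert (Hm0 : s0 <= m) by (apply Hub; auto).
assert (Hmt : m <= t). { apply Hlub. intros x Hx. apply Hx. }
assert (P : forall r, 0 < r < m -> 0 < h r).
{ intros r Hr. destruct (Rlt_or_le 0 (h r)) as [B|B]; auto. exfalso.
  assert (Hb : is_upper_bound E r).
  { intros x [Hx1 Hx2]. destruct (Rle_or_lt x r) as [C|C]; auto.
    specialize (Hx2 r ltac:(lra)). lra. }
  specialize (Hlub r Hb). lra. }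
destruct (Rtotal_order (h m) 0) as [B|[B|B]].
- destruct (cont_eps h m (Hc m ltac:(lra)) (- h m) ltac:(lra)) as [eta [Heta Heta2]].
  set (r := Rmax (m/2) (m - eta/2)).
  assert (Hr : 0 < r < m /\ Rabs (r - m) < eta).
  { unfold r. split. split. apply Rlt_le_trans with (m/2). lra. apply Rmax_l.
    apply Rmax_lub_lt; lra.
    rewrite Rabs_left. assert (m - eta/2 <= Rmax (m/2) (m - eta/2)) by apply Rmax_r. lra.
    assert (Rmax (m/2) (m - eta/2) < m) by (apply Rmax_lub_lt; lra). lra. }
  specialize (Heta2 r (proj2 Hr)). apply Rabs_def2 in Heta2. specialize (P r (proj1 Hr)). lra.
- destruct (Hz m ltac:(lra) B) as [e [He He2]].
  set (r := Rmax (m/2) (m - e/2)).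
  assert (Hr : 0 < r < m /\ m - e < r).
  { unfold r. split. split. apply Rlt_le_trans with (m/2). lra. apply Rmax_l.
    apply Rmax_lub_lt; lra.
    assert (m - e/2 <= Rmax (m/2) (m - e/2)) by apply Rmax_r. lra. }
  specialize (He2 r ltac:(lra)). specialize (P r (proj1 Hr)). lra.
- assert (Hmt' : m < t). { destruct Hmt as [C|C]; auto. subst m. lra. }
  destruct (cont_eps h m (Hc m ltac:(lra)) (h m) ltac:(lra)) as [eta [Heta Heta2]].
  set (m' := Rmin t (m + eta/2)).
  assert (Hm' : m < m' <= t /\ m' <= m + eta/2).
  { unfold m'. split. split. apply Rmin_glb_lt; lra. apply Rmin_l. apply Rmin_r. }
  assert (HE' : E m').
  { split. lra. intros r Hr. destruct (Rlt_or_le r m) as [C|C]. apply P; lra.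
    assert (Rabs (r - m) < eta). { rewrite Rabs_right by lra. lra. }
    specialize (Heta2 r H). apply Rabs_def2 in Heta2. lra. }
  specialize (Hub m' HE'). lra.
Qed.

Lemma ln_le' x y : 0 < x -> x <= y -> ln x <= ln y.
Proof. intros H [H1|H1]. left; apply ln_increasing; auto. subst; lra. Qed.
Lemma exp_le' x y : x <= y -> exp x <= exp y.
Proof. intros [H|H]. left; apply exp_increasing; auto. subst; lra. Qed.
Lemma div_le_of a b c : 0 < c -> a <= b * c -> a / c <= b.
Proof. intros Hc H. apply Rmult_le_reg_r with c; auto. unfold Rdiv. rewrite Rmult_assoc, Rinv_l by lra. lra. Qed.
Lemma le_div_of a b c : 0 < c -> b * c <= a -> b <= a / c.
Proof. intros Hc H. apply Rmult_le_reg_r with c; auto. unfold Rdiv. rewrite Rmult_assoc, Rinv_l by lra. lra. Qed.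

Lemma mono_cl (h dh : R -> R) a b : a <= b ->
  (forall t, a <= t <= b -> is_derive h t (dh t)) ->
  (forall t, a <= t <= b -> 0 <= dh t) -> h a <= h b.
Proof.
intros Hab Hd Hp.
destruct (MVT_gen h a b dh) as [c [Hc Heq]].
- intros x Hx. rewrite Rmin_left in Hx by lra. rewrite Rmax_right in Hx by lra. apply Hd. lra.
- intros x Hx. rewrite Rmin_left in Hx by lra. rewrite Rmax_right in Hx by lra.
  apply cont_of_der with (dh x). apply Hd. lra.
- rewrite Rmin_left in Hc by lra. rewrite Rmax_right in Hc by lra.
  assert (0 <= dh c * (b - a)). { apply Rmult_le_pos. apply Hp. lra. lra. }
  lra.
Qed.


Definition t0f k lam0 := Rmax 1 (ln ((k-1)/2) / lam0).
Definition c1f k lam0 d1 := Rmin 1 (t0f k lam0 * exp (lam0 * t0f k lam0) / k) * exp (- d1 * t0f k lam0).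
Definition C3f k lam0 d1 L := t0f k lam0 + (ln (1/k) - ln (c1f k lam0 d1) - L / (k * lam0) + L * (1/k) / (L * (1 - 1/k) / 2)) / L.
Definition Tupf k lam0 d1 L a eps := Rmax (t0f k lam0) (C3f k lam0 d1 L - ln (a + eps) / L).
Definition Tlowf k lam0 L a eps := (ln (1/k) - ln (a + eps * (1 / (k * (L - lam0))))) / L.

Ltac fixD H := match goal with |- context [Derive (fun x0 => ?y x0) ?x] =>
  let E := fresh in assert (E : Derive (fun x0 => y x0) x = _) by (apply is_derive_unique; apply H; lra);
  rewrite E; clear E end.

Lemma per_n (f : R -> R -> R) (d1 lam0 k a eps : R) (y0 y1 : R -> R)
  (Hlam0 : lam0 < 0) (HL : 0 < f 0 0 - d1) (Hk : 1 < k) (Ha : 0 < a) (Hak : a < 1 / k)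
  (He : 0 < eps) (Hd1 : 0 < d1)
  (Fpos : forall x y, 0 <= x -> 0 <= y -> 0 <= f x y)
  (Fle : forall x y, 0 <= x -> 0 <= y -> f x y <= f 0 0)
  (F5 : forall x y, 0 <= x -> 0 <= y -> f x y >= (f 0 0 - d1) * (1 - (x + y)) + d1)
  (H0d : forall t, 0 < t -> is_derive y0 t (lam0 * y0 t))
  (H1d : forall t, 0 < t -> is_derive y1 t ((f (y0 t) (y1 t) - d1) * y1 t + eps * y0 t))
  (H0l : filterlim y0 (at_right 0) (locally (y0 0)))
  (H1l : filterlim y1 (at_right 0) (locally (y1 0)))
  (H00 : y0 0 = 1 / k) (H10 : y1 0 = a) :
  (exists t, 0 < t /\ y1 t = 1 / k /\ t <= Tupf k lam0 d1 (f 0 0 - d1) a eps) /\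
  (forall t, 0 < t -> y1 t = 1 / k -> Tlowf k lam0 (f 0 0 - d1) a eps <= t).
Proof.
set (L := f 0 0 - d1).
assert (HL2 : 0 < L) by exact HL.
assert (Y0 : forall t, 0 < t -> y0 t = exp (lam0 * t) / k).
{ intros t Ht.
  assert (Hlim : forall s, filterlim (fun x => y0 x * (s * exp (- lam0 * x)) + 0) (at_right 0)
                      (locally (y0 0 * (s * exp (- lam0 * 0)) + 0))).
  { intros s. apply comb. exact H0l.
    apply (ex_derive_continuous (K:=R_AbsRing) (V:=R_NormedModule)). auto_derive. auto.
    apply (ex_derive_continuous (K:=R_AbsRing) (V:=R_NormedModule)). auto_derive. auto. }
  assert (Hder : forall s x, 0 < x <= t -> is_derive (fun x => y0 x * (s * exp (- lam0 * x)) + 0) x 0).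
  { intros s x Hx. auto_derive. exists (lam0 * y0 x). apply H0d. lra.
    fixD H0d. ring. }
  pose proof (mono0 _ (fun _ => 0) t _ (Hlim 1) (Hder 1) ltac:(intros; lra) t ltac:(lra)) as M1.
  pose proof (mono0 _ (fun _ => 0) t _ (Hlim (-1)) (Hder (-1)) ltac:(intros; lra) t ltac:(lra)) as M2.
  simpl in M1, M2. rewrite Rmult_0_r, exp_0, H00 in M1, M2.
  assert (Eq : y0 t * exp (- lam0 * t) = 1 / k) by lra.
  apply (f_equal (fun z => z * exp (lam0 * t))) in Eq.
  rewrite Rmult_assoc, <- exp_plus in Eq. replace (- lam0 * t + lam0 * t) with 0 in Eq by ring.
  rewrite exp_0 in Eq. lra. }
assert (Y1p : forall t, 0 < t -> 0 < y1 t).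
{ apply first_pos.
  - intros t Ht. eapply cont_of_der. apply H1d. exact Ht.
  - destruct (eps_right y1 (y1 0) H1l a Ha) as [d [Hd Hdd]]. exists d. split; auto.
    intros t Ht. specialize (Hdd t Ht). rewrite H10 in Hdd. apply Rabs_def2 in Hdd. lra.
  - intros t Ht Hz. eapply der_pos_left. apply H1d. exact Ht. 2: exact Hz.
    rewrite Hz, Y0 by lra. rewrite Rmult_0_r, Rplus_0_l. apply Rmult_lt_0_compat. auto.
    apply Rdiv_lt_0_compat. apply exp_pos. lra. }
assert (Y0p : forall t, 0 < t -> 0 < y0 t).
{ intros t Ht. rewrite Y0 by lra. apply Rdiv_lt_0_compat. apply exp_pos. lra. }
assert (Hphi_le : forall t, 0 < t -> f (y0 t) (y1 t) - d1 <= L).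
{ intros t Ht. unfold L. pose proof (Fle (y0 t) (y1 t)). pose proof (Y0p t Ht). pose proof (Y1p t Ht). lra. }
set (c2 := 1 / (k * (L - lam0))).
assert (Up : forall t, 0 < t -> y1 t <= (a + eps * c2) * exp (L * t)).
{ intros t Ht.
  assert (Hlim : filterlim (fun x => y1 x * (- exp (- L * x)) + (- (eps * c2) * exp ((lam0 - L) * x))) (at_right 0)
                      (locally (y1 0 * (- exp (- L * 0)) + (- (eps * c2) * exp ((lam0 - L) * 0))))).
  { apply comb. exact H1l.
    apply (ex_derive_continuous (K:=R_AbsRing) (V:=R_NormedModule)). auto_derive. auto.
    apply (ex_derive_continuous (K:=R_AbsRing) (V:=R_NormedModule)). auto_derive. auto. }
  assert (Hder : forall x, 0 < x <= t -> is_derive (fun x => y1 x * (- exp (- L * x)) + (- (eps * c2) * exp ((lam0 - L) * x))) x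
          ((L - (f (y0 x) (y1 x) - d1)) * y1 x * exp (- L * x))).
  { intros x Hx. auto_derive. eexists. apply H1d. lra.
    fixD H1d. rewrite Y0 by lra.
    replace (exp ((lam0 - L) * x)) with (exp (lam0 * x) * exp (- L * x)) by (rewrite <- exp_plus; f_equal; ring).
    unfold c2. field. split; intro; lra. }
  pose proof (mono0 _ _ t _ Hlim Hder) as M.
  assert (M' : forall x, 0 < x <= t -> 0 <= (L - (f (y0 x) (y1 x) - d1)) * y1 x * exp (- L * x)).
  { intros x Hx. apply Rmult_le_pos. apply Rmult_le_pos. pose proof (Hphi_le x ltac:(lra)). lra.
    pose proof (Y1p x ltac:(lra)). lra. pose proof (exp_pos (- L * x)). lra. }
  specialize (M M' t ltac:(lra)). rewrite Rmult_0_r, Rmult_0_r, exp_0, H10 in M.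
  assert (E1 : y1 t * exp (- L * t) <= a + eps * c2).
  { assert (0 < eps * c2 * exp ((lam0 - L) * t)).
    { apply Rmult_lt_0_compat. apply Rmult_lt_0_compat. auto. unfold c2. apply Rdiv_lt_0_compat. lra.
      apply Rmult_lt_0_compat; lra. apply exp_pos. }
    lra. }
  apply Rmult_le_compat_r with (r := exp (L * t)) in E1. 2: left; apply exp_pos.
  rewrite Rmult_assoc, <- exp_plus in E1. replace (- L * t + L * t) with 0 in E1 by ring.
  rewrite exp_0, Rmult_1_r in E1. exact E1. }
assert (Hc2 : 0 < c2). { unfold c2. apply Rdiv_lt_0_compat. lra. apply Rmult_lt_0_compat; lra. }
assert (Hk0 : 0 < 1 / k) by (apply Rdiv_lt_0_compat; lra).
split; cycle 1.
{
  intros t Ht Hy. unfold Tlowf. fold L. fold c2.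
  pose proof (Up t Ht) as U. rewrite Hy in U.
  assert (Hpos : 0 < a + eps * c2) by (pose proof (Rmult_lt_0_compat _ _ He Hc2); lra).
  apply ln_le' in U; auto. rewrite ln_mult, ln_exp in U; auto. 2: apply exp_pos.
  apply div_le_of; auto. lra. }
set (t0 := t0f k lam0).
assert (Ht0 : 1 <= t0) by (unfold t0, t0f; apply Rmax_l).
assert (Hexp0 : exp (lam0 * t0) <= (k - 1) / 2).
{ assert (H1 : ln ((k-1)/2) / lam0 <= t0) by (unfold t0, t0f; apply Rmax_r).
  apply Rmult_le_compat_neg_l with (r := lam0) in H1; [|lra].
  replace (lam0 * (ln ((k - 1) / 2) / lam0)) with (ln ((k-1)/2)) in H1 by (field; lra).
  rewrite <- (exp_ln ((k-1)/2)) by lra. apply exp_le'. lra. }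
assert (Hexp0' : exp (lam0 * t0) <= 1).
{ rewrite <- exp_0. apply exp_le'. nra. }
assert (Y0small : forall x, t0 <= x -> y0 x <= (1 - 1/k) / 2).
{ intros x Hx. rewrite Y0 by lra.
  assert (exp (lam0 * x) <= exp (lam0 * t0)) by (apply exp_le'; nra).
  replace ((1 - 1/k)/2) with (((k-1)/2) / k) by (field; lra).
  unfold Rdiv at 1 3. apply Rmult_le_compat_r. left; apply Rinv_0_lt_compat; lra. lra. }
set (m0 := t0 * exp (lam0 * t0) / k).
assert (Hm0 : 0 < m0). { unfold m0. apply Rdiv_lt_0_compat. apply Rmult_lt_0_compat. lra. apply exp_pos. lra. }
assert (E1 : a + eps * m0 <= y1 t0 * exp (d1 * t0)).
{ assert (Hlim : filterlim (fun x => y1 x * exp (d1 * x) + (- (eps * (exp (lam0 * t0) / k)) * x)) (at_right 0)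
                      (locally (y1 0 * exp (d1 * 0) + (- (eps * (exp (lam0 * t0) / k)) * 0)))).
  { apply comb. exact H1l.
    apply (ex_derive_continuous (K:=R_AbsRing) (V:=R_NormedModule)). auto_derive. auto.
    apply (ex_derive_continuous (K:=R_AbsRing) (V:=R_NormedModule)). auto_derive. auto. }
  assert (Hder : forall x, 0 < x <= t0 -> is_derive (fun x => y1 x * exp (d1 * x) + (- (eps * (exp (lam0 * t0) / k)) * x)) x
          (f (y0 x) (y1 x) * y1 x * exp (d1 * x) + eps * (exp (lam0 * x) * exp (d1 * x) - exp (lam0 * t0)) / k)).
  { intros x Hx. auto_derive. eexists. apply H1d. lra.
    fixD H1d. rewrite Y0 by lra. field. lra. }
  assert (Hsg : forall x, 0 < x <= t0 -> 0 <= f (y0 x) (y1 x) * y1 x * exp (d1 * x) + eps * (exp (lam0 * x) * exp (d1 * x) - exp (lam0 * t0)) / k).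
  { intros x Hx. apply Rplus_le_le_0_compat.
    apply Rmult_le_pos. apply Rmult_le_pos. apply Fpos. left; apply Y0p; lra. left; apply Y1p; lra.
    left; apply Y1p; lra. left; apply exp_pos.
    apply Rdiv_le_0_compat. 2: lra. apply Rmult_le_pos. lra.
    assert (exp (lam0 * t0) <= exp (lam0 * x)) by (apply exp_le'; nra).
    assert (1 <= exp (d1 * x)) by (rewrite <- exp_0; apply exp_le'; nra).
    assert (exp (lam0 * t0) * 1 <= exp (lam0 * x) * exp (d1 * x)).
    { apply Rmult_le_compat; try lra. left; apply exp_pos. }
    lra. }
  pose proof (mono0 _ _ t0 _ Hlim Hder Hsg t0 ltac:(lra)) as M.
  rewrite Rmult_0_r, exp_0, H10 in M. unfold m0.
  replace (eps * (t0 * exp (lam0 * t0) / k)) with (eps * (exp (lam0 * t0) / k) * t0) by (field; lra).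
  lra. }
set (c1 := c1f k lam0 d1).
assert (Hc1 : 0 < c1).
{ unfold c1, c1f. fold t0. fold m0. apply Rmult_lt_0_compat. apply Rmin_glb_lt; lra. apply exp_pos. }
assert (E1' : c1 * (a + eps) <= y1 t0).
{ unfold c1, c1f. fold t0. fold m0.
  assert (Rmin 1 m0 * (a + eps) <= a + eps * m0).
  { pose proof (Rmin_l 1 m0). pose proof (Rmin_r 1 m0). nra. }
  apply Rmult_le_compat_r with (r := exp (- d1 * t0)) in E1. 2: left; apply exp_pos.
  rewrite Rmult_assoc, <- exp_plus in E1. replace (d1 * t0 + - d1 * t0) with 0 in E1 by ring.
  rewrite exp_0, Rmult_1_r in E1.
  assert (Rmin 1 m0 * (a + eps) * exp (- d1 * t0) <= (a + eps * m0) * exp (- d1 * t0)).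
  { apply Rmult_le_compat_r. left; apply exp_pos. auto. }
  nra. }
set (c := L * (1 - 1/k) / 2).
assert (Hk1 : 1/k < 1). { apply Rmult_lt_reg_r with k. lra. field_simplify; lra. }
assert (Hc : 0 < c). { unfold c. apply Rdiv_lt_0_compat. apply Rmult_lt_0_compat; lra. lra. }
set (Tup := Tupf k lam0 d1 L a eps).
assert (HT1 : t0 <= Tup) by (unfold Tup, Tupf; fold t0; apply Rmax_l).
assert (HT2 : C3f k lam0 d1 L - ln (a + eps) / L <= Tup) by (unfold Tup, Tupf; apply Rmax_r).
assert (Hex : exists t, 0 < t <= Tup /\ 1/k <= y1 t).
{ destruct (classic (exists t, 0 < t <= Tup /\ 1/k <= y1 t)) as [H|H]; auto. exfalso.
  assert (Hlt : forall t, 0 < t <= Tup -> y1 t < 1/k).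
  { intros t Ht. destruct (Rlt_or_le (y1 t) (1/k)) as [A|A]; auto. exfalso. apply H. exists t. auto. }
  set (g := fun x => ln (y1 x) - L * x + L * (exp (lam0 * x) / (k * lam0)) + (L / c) * y1 x).
  set (dg := fun x => (f (y0 x) (y1 x) - d1) + eps * y0 x / y1 x - L + L * y0 x
                      + (L / c) * ((f (y0 x) (y1 x) - d1) * y1 x + eps * y0 x)).
  assert (Hder : forall x, t0 <= x <= Tup -> is_derive g x (dg x)).
  { intros x Hx. unfold g, dg. pose proof (Y1p x ltac:(lra)).
    auto_derive. split. eexists. apply H1d. lra. split. auto. split. eexists. apply H1d. lra. auto.
    fixD H1d. rewrite Y0 by lra. field. repeat split; intro; lra. }
  assert (Hsg : forall x, t0 <= x <= Tup -> 0 <= dg x).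
  { intros x Hx. unfold dg.
    pose proof (Y1p x ltac:(lra)) as P1. pose proof (Y0p x ltac:(lra)) as P0.
    pose proof (Y0small x ltac:(lra)) as S0. pose proof (Hlt x ltac:(lra)) as S1.
    pose proof (F5 (y0 x) (y1 x) ltac:(lra) ltac:(lra)) as F. fold L in F.
    set (phi := f (y0 x) (y1 x) - d1) in *.
    assert (Fa : phi >= L * (1 - (y0 x + y1 x))) by (unfold phi; lra).
    assert (Fb : L * (1 - (y0 x + y1 x)) >= c).
    { unfold c. assert (1 - (y0 x + y1 x) >= (1 - 1/k)/2) by lra.
      replace (L * (1 - 1 / k) / 2) with (L * ((1 - 1/k)/2)) by (field; intro; lra). nra. }
    assert (Fc : 0 <= eps * y0 x / y1 x).
    { apply Rdiv_le_0_compat; nra. }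
    assert (Fd : (L / c) * (c * y1 x) <= (L / c) * (phi * y1 x + eps * y0 x)).
    { apply Rmult_le_compat_l. left; apply Rdiv_lt_0_compat; lra. nra. }
    replace ((L / c) * (c * y1 x)) with (L * y1 x) in Fd by (field; lra).
    nra. }
  pose proof (mono_cl g dg t0 Tup HT1 Hder Hsg) as M. unfold g in M.
  pose proof (Y1p t0 ltac:(lra)) as P0. pose proof (Hlt Tup ltac:(lra)) as PT. pose proof (Y1p Tup ltac:(lra)) as PT'.
  assert (G1 : ln (1/k) > ln (y1 Tup)) by (apply ln_increasing; lra).
  assert (G2 : ln c1 + ln (a + eps) <= ln (y1 t0)).
  { rewrite <- ln_mult; auto. apply ln_le'; auto. apply Rmult_lt_0_compat; lra. lra. }
  assert (G3 : L / (k * lam0) <= L * (exp (lam0 * t0) / (k * lam0)) - L * (exp (lam0 * Tup) / (k * lam0))).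
  { assert (Hn : 0 < - (L / (k * lam0))).
    { replace (- (L / (k * lam0))) with (L / (k * - lam0)) by (field; split; intro; lra).
      apply Rdiv_lt_0_compat; nra. }
    pose proof (exp_pos (lam0 * Tup)).
    assert (0 <= (- (L / (k * lam0))) * (- (exp (lam0 * t0) - exp (lam0 * Tup) - 1))) by (apply Rmult_le_pos; lra).
    replace (L * (exp (lam0 * t0) / (k * lam0)) - L * (exp (lam0 * Tup) / (k * lam0)))
      with (L / (k * lam0) + (- (L / (k * lam0))) * (- (exp (lam0 * t0) - exp (lam0 * Tup) - 1))) by (field; split; intro; lra).
    lra. }
  assert (G4 : - ((L / c) * (1/k)) <= (L / c) * y1 t0 - (L / c) * y1 Tup).
  { assert (0 < L / c) by (apply Rdiv_lt_0_compat; lra).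
    assert ((L / c) * y1 Tup <= (L / c) * (1/k)) by (apply Rmult_le_compat_l; lra).
    assert (0 <= (L / c) * y1 t0) by (apply Rmult_le_pos; lra). lra. }
  assert (G5 : L * C3f k lam0 d1 L - ln (a + eps) <= L * Tup).
  { replace (L * C3f k lam0 d1 L - ln (a + eps)) with (L * (C3f k lam0 d1 L - ln (a + eps) / L)) by (field; lra).
    apply Rmult_le_compat_l; lra. }
  unfold C3f in G5. fold t0 in G5. fold c1 in G5.
  replace (L * (t0 + (ln (1 / k) - ln c1 - L / (k * lam0) + L * (1 / k) / (L * (1 - 1 / k) / 2)) / L))
    with (L * t0 + ln (1 / k) - ln c1 - L / (k * lam0) + (L / c) * (1 / k)) in G5 by (unfold c; field; repeat split; intro; nra).
  lra. }
destruct Hex as [t1 [Ht1 Hy1]].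
destruct (eps_right y1 (y1 0) H1l (1/k - a) ltac:(lra)) as [d [Hd Hdd]].
set (s := Rmin (d/2) (t1/2)).
assert (Hs : 0 < s /\ s < d /\ s < t1).
{ unfold s. split. apply Rmin_glb_lt; lra. split. apply Rle_lt_trans with (d/2). apply Rmin_l. lra.
  apply Rle_lt_trans with (t1/2). apply Rmin_r. lra. }
assert (Hys : y1 s < 1/k). { specialize (Hdd s ltac:(lra)). rewrite H10 in Hdd. apply Rabs_def2 in Hdd. lra. }
destruct (ivt_hit y1 s t1 (1/k)) as [x [Hx Hyx]]; try lra.
{ intros x Hx. eapply cont_of_der. apply H1d. lra. }
exists x. repeat split; try lra.
Qed.


Lemma lim_ln_inv (C : R) : is_lim_seq (fun n => C / ln (INR n)) 0.
Proof.
assert (H1 : is_lim_seq (fun n => ln (INR n)) p_infty).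
{ apply is_lim_comp_seq with (x := p_infty). apply is_lim_ln_p.
  exists 0%nat. intros n _. discriminate. apply is_lim_seq_INR. }
assert (H2 := is_lim_seq_inv _ _ H1 ltac:(discriminate)). simpl in H2.
assert (H3 := is_lim_seq_scal_l _ C _ H2). simpl in H3. rewrite Rmult_0_r in H3.
apply is_lim_seq_ext with (2 := H3). intros n. unfold Rdiv. ring.
Qed.

Lemma Rpower_pos' x y : 0 < Rpower x y.
Proof. unfold Rpower. apply exp_pos. Qed.

Lemma ln_Rpower_mul p u N : 0 < p -> 0 < N -> ln (p * Rpower N (- u)) = ln p - u * ln N.
Proof. intros Hp HN. rewrite ln_mult; auto. rewrite ln_Rpower. ring. apply Rpower_pos'. Qed.

Lemma lnsum p q u v N : 0 < p -> 0 < q -> 1 <= N ->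
  ln (Rmin p q) - Rmin u v * ln N <= ln (p * Rpower N (- u) + q * Rpower N (- v)) /\
  ln (p * Rpower N (- u) + q * Rpower N (- v)) <= ln (p + q) - Rmin u v * ln N.
Proof.
intros Hp Hq HN.
assert (Pu := Rpower_pos' N (-u)). assert (Pv := Rpower_pos' N (-v)).
assert (Hm0 : 0 < Rmin p q) by (apply Rmin_glb_lt; auto).
assert (Hs : 0 < p * Rpower N (- u) + q * Rpower N (- v)) by nra.
destruct (Rle_or_lt u v) as [Huv|Huv].
- rewrite (Rmin_left u v) by lra.
  assert (Hle : Rpower N (- v) <= Rpower N (- u)) by (apply Rle_Rpower; lra).
  rewrite <- !ln_Rpower_mul by lra. split.
  + apply ln_le'. apply Rmult_lt_0_compat; auto. pose proof (Rmin_l p q). nra.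
  + apply ln_le'. auto. nra.
- rewrite (Rmin_right u v) by lra.
  assert (Hle : Rpower N (- u) <= Rpower N (- v)) by (apply Rle_Rpower; lra).
  rewrite <- !ln_Rpower_mul by lra. split.
  + apply ln_le'. apply Rmult_lt_0_compat; auto. pose proof (Rmin_r p q). nra.
  + apply ln_le'. auto. nra.
Qed.

Lemma glb_bounds (E : R -> Prop) (lo x : R) : E x -> (forall y, E y -> lo <= y) ->
  is_finite (Glb_Rbar E) /\ lo <= real (Glb_Rbar E) <= x.
Proof.
intros Hx Hlo. destruct (Glb_Rbar_correct E) as [Hlb Hgr].
specialize (Hlb x Hx). assert (Hg : Rbar_le lo (Glb_Rbar E)).
{ apply Hgr. intros y Hy. simpl. apply Hlo; auto. }
destruct (Glb_Rbar E) as [g| |]; simpl in *; try contradiction.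
split. reflexivity. lra.
Qed.


Theorem proposition3p1
  (r0 d0 d1 k alpha beta : R) (f : R -> R -> R)
  (y0 y1 yb : nat -> R -> R)
  (Hr0 : 0 <= r0) (Hd0 : 0 <= d0) (Hl0 : r0 - d0 < 0)
  (Hd1 : 0 < d1) (Hk : 1 < k)
  (Ha : 0 < alpha < 1) (Hb : 0 < beta < 1)
  (Hf : f_assumptions f d1)
  (Hsol : forall n : nat, (1 <= n)%nat ->
            solves_system f r0 d0 d1 k alpha beta n (y0 n) (y1 n) (yb n)) :
  (exists N : nat, forall n : nat, (N <= n)%nat ->
      is_finite (zeta k n (y1 n))) /\
  is_lim_seq (fun n : nat => real (zeta k n (y1 n)) / ln (INR n))
    (Rmin (1 - beta) alpha / (f 0 0 - d1)).
Proof.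
destruct Hf as (Fpos & _ & (Hr1 & _ & _) & (Phi & Phimon & _ & PhiE) & _ & _ & F5).
assert (Fle : forall x y, 0 <= x -> 0 <= y -> f x y <= f 0 0).
{ intros x y Hx Hy. rewrite (PhiE x y Hx Hy), (PhiE 0 0) by lra. rewrite Rplus_0_r. apply Phimon; lra. }
assert (HL : 0 < f 0 0 - d1) by lra.
assert (Hk0 : 0 < 1 / k) by (apply Rdiv_lt_0_compat; lra).
assert (Hc2 : 0 < 1 / (k * ((f 0 0 - d1) - (r0 - d0)))).
{ apply Rdiv_lt_0_compat. lra. apply Rmult_lt_0_compat; lra. }
assert (Hm : 0 < Rmin (1 - beta) alpha) by (apply Rmin_glb_lt; lra).
set (Cl := (ln (1/k) - ln (1/k + 1 / (k * ((f 0 0 - d1) - (r0 - d0))))) / (f 0 0 - d1)).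
set (Cu := t0f k (r0 - d0) + Rabs (C3f k (r0 - d0) d1 (f 0 0 - d1)) + Rabs (ln (Rmin (1/k) 1)) / (f 0 0 - d1)).
assert (Key : forall n, (2 <= n)%nat -> is_finite (zeta k n (y1 n)) /\
   Rmin (1 - beta) alpha * ln (INR n) / (f 0 0 - d1) + Cl <= real (zeta k n (y1 n)) <=
   Rmin (1 - beta) alpha * ln (INR n) / (f 0 0 - d1) + Cu).
{ intros n Hn.
  assert (HN : 2 <= INR n) by (replace 2 with (INR 2) by (simpl; ring); apply le_INR; auto).
  destruct (Hsol n ltac:(lia)) as (H0d & H1d & _ & H0l & H1l & _ & H00 & H10 & _).
  cbv beta zeta in H1d.
  set (N := INR n) in *.
  assert (Ea : Rpower N beta / (k * N) = 1 / k * Rpower N (- (1 - beta))).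
  { replace (- (1 - beta)) with (beta + - (1)) by ring. rewrite Rpower_plus, Rpower_Ropp, Rpower_1 by lra.
    field. lra. }
  assert (Hak : Rpower N beta / (k * N) < 1 / k).
  { rewrite Ea. pose proof (Rpower_lt N (- (1 - beta)) 0 ltac:(lra) ltac:(lra)). rewrite Rpower_O in H by lra. nra. }
  assert (Ha' : 0 < Rpower N beta / (k * N)).
  { apply Rdiv_lt_0_compat. apply Rpower_pos'. nra. }
  replace (N / (k * N)) with (1 / k) in H00 by (field; lra).
  destruct (per_n f d1 (r0 - d0) k (Rpower N beta / (k * N)) (Rpower N (- alpha)) (y0 n) (y1 n)
     Hl0 HL Hk Ha' Hak (Rpower_pos' _ _) Hd1 Fpos Fle F5 H0d H1d H0l H1l H00 H10)
     as [[t [Ht [Hyt Htup]]] Hlow].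
  unfold zeta. fold N. replace (N / (k * N)) with (1 / k) by (field; lra).
  destruct (glb_bounds (fun t => 0 < t /\ y1 n t = 1 / k) (Tlowf k (r0 - d0) (f 0 0 - d1)
     (Rpower N beta / (k * N)) (Rpower N (- alpha))) t) as [Hfin [Hlo Hhi]].
  { split; auto. }
  { intros s [Hs1 Hs2]. apply Hlow; auto. }
  split; auto.
  assert (HlnN : 0 < ln N) by (rewrite <- ln_1; apply ln_increasing; lra).
  rewrite Ea in Hlo, Htup.
  destruct (lnsum (1/k) (1 / (k * ((f 0 0 - d1) - (r0 - d0)))) (1 - beta) alpha N Hk0 Hc2 ltac:(lra)) as [_ U1].
  destruct (lnsum (1/k) 1 (1 - beta) alpha N Hk0 ltac:(lra) ltac:(lra)) as [L2 _].
  rewrite Rmult_1_l in L2.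
  split.
  - eapply Rle_trans; [|exact Hlo]. unfold Tlowf, Cl.
    replace (Rpower N (- alpha) * (1 / (k * (f 0 0 - d1 - (r0 - d0))))) with
      (1 / (k * (f 0 0 - d1 - (r0 - d0))) * Rpower N (- alpha)) by ring.
    unfold Rdiv at 1 2 4. rewrite <- Rmult_plus_distr_r. apply Rmult_le_compat_r.
    left; apply Rinv_0_lt_compat; lra. lra.
  - eapply Rle_trans; [exact Hhi|]. eapply Rle_trans; [exact Htup|]. unfold Tupf, Cu. apply Rmax_lub.
    + assert (0 <= Rabs (C3f k (r0 - d0) d1 (f 0 0 - d1))) by apply Rabs_pos.
      assert (0 <= Rabs (ln (Rmin (1 / k) 1)) / (f 0 0 - d1)) by (apply Rdiv_le_0_compat; [apply Rabs_pos|lra]).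
      assert (0 <= Rmin (1 - beta) alpha * ln N / (f 0 0 - d1)) by (apply Rdiv_le_0_compat; [nra|lra]).
      lra.
    + assert (C3f k (r0 - d0) d1 (f 0 0 - d1) <= Rabs (C3f k (r0 - d0) d1 (f 0 0 - d1))) by apply Rle_abs.
      assert (- ln (Rmin (1 / k) 1) <= Rabs (ln (Rmin (1 / k) 1))) by (rewrite <- Rabs_Ropp; apply Rle_abs).
      set (X := ln (1 / k * Rpower N (- (1 - beta)) + Rpower N (- alpha))) in *.
      assert (D : - X / (f 0 0 - d1) <= (Rmin (1 - beta) alpha * ln N + Rabs (ln (Rmin (1 / k) 1))) / (f 0 0 - d1)).
      { unfold Rdiv. apply Rmult_le_compat_r. left; apply Rinv_0_lt_compat; lra. lra. }
      assert (t0f k (r0 - d0) >= 1) by (unfold t0f; apply Rle_ge, Rmax_l).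
      replace ((Rmin (1 - beta) alpha * ln N + Rabs (ln (Rmin (1 / k) 1))) / (f 0 0 - d1)) with
        (Rmin (1 - beta) alpha * ln N / (f 0 0 - d1) + Rabs (ln (Rmin (1 / k) 1)) / (f 0 0 - d1)) in D by (field; lra).
      replace (- X / (f 0 0 - d1)) with (- (X / (f 0 0 - d1))) in D by (field; lra).
      lra. }
split.
{ exists 2%nat. intros n Hn. apply (Key n Hn). }
apply is_lim_seq_le_le_loc with
  (u := fun n => Rmin (1 - beta) alpha / (f 0 0 - d1) + Cl / ln (INR n))
  (w := fun n => Rmin (1 - beta) alpha / (f 0 0 - d1) + Cu / ln (INR n)).
- exists 2%nat. intros n Hn. destruct (Key n Hn) as [_ [K1 K2]].
  assert (HN : 2 <= INR n) by (replace 2 with (INR 2) by (simpl; ring); apply le_INR; auto).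
  assert (HlnN : 0 < ln (INR n)) by (rewrite <- ln_1; apply ln_increasing; lra).
  split.
  + apply le_div_of; auto.
    replace ((Rmin (1 - beta) alpha / (f 0 0 - d1) + Cl / ln (INR n)) * ln (INR n))
      with (Rmin (1 - beta) alpha * ln (INR n) / (f 0 0 - d1) + Cl) by (field; lra). lra.
  + apply div_le_of; auto.
    replace ((Rmin (1 - beta) alpha / (f 0 0 - d1) + Cu / ln (INR n)) * ln (INR n))
      with (Rmin (1 - beta) alpha * ln (INR n) / (f 0 0 - d1) + Cu) by (field; lra). lra.
- assert (H := is_lim_seq_plus' _ _ _ _ (is_lim_seq_const (Rmin (1 - beta) alpha / (f 0 0 - d1))) (lim_ln_inv Cl)).
  rewrite Rplus_0_r in H. exact H.
- assert (H := is_lim_seq_plus' _ _ _ _ (is_lim_seq_const (Rmin (1 - beta) alpha / (f 0 0 - d1))) (lim_ln_inv Cu)).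
  rewrite Rplus_0_r in H. exact H.
Qed.
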